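(* Let $\mathbb{M}^3$ be Minkowski 3-space with inner product $\langle x,y\rangle_{\mathbb{L}}=-x_1y_1+x_2y_2+x_3y_3$. Let $\sigma=\sigma(u,v)$ be a smooth surface in $\mathbb{M}^3$ and let $\{t,n,b\}$ be smooth vector fields along $\sigma$ with $\langle t,t\rangle_{\mathbb{L}}=1$, $\langle n,n\rangle_{\mathbb{L}}=-1$, $\langle b,b\rangle_{\mathbb{L}}=1$, pairwise orthogonal, such that $\sigma_u=t$, $\sigma_v=\lambda b$ for a nowhere-vanishing function $\lambda$, and $$t_u=-\kappa n,\qquad n_u=-\kappa t-\tau b,\qquad b_u=-\tau n$$ for functions $\kappa,\tau$ (so each $u$-curve is a unit-speed spacelike curve with timelike principal normal $n$, curvature $\kappa$ and torsion $\tau$, and is a geodesic of $\sigma$). Assume there are constants $A,B$, not both zero, with $A\kappa+B\tau=1$, and that $\tau$ vanishes nowhere. Define $$\sigma^*(u,v)=\sigma(u,v)+A\,n(u,v),\qquad t^*=\frac{Bt-Ab}{\sqrt{A^2+B^2}},\qquad b^*=\frac{At+Bb}{\sqrt{A^2+B^2}},$$ and along each $u$-curve let $u^*$ be a parameter with $du^*/du=\sqrt{A^2+B^2}\,\tau$. Then: (1) $\sigma^*_u=\tau(Bt-Ab)$, so $t^*=\partial\sigma^*/\partial u^*$ is a unit spacelike vector, and $n$ is orthogonal to both $\sigma^*_u$ and $\sigma^*_v$; (2) $\|\sigma-\sigma^*\|=\sqrt{|\langle \sigma-\sigma^*,\sigma-\sigma^*\rangle_{\mathbb{L}}|}$ is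 constant, $\langle\sigma^*-\sigma,b\rangle_{\mathbb{L}}=0$, $\langle\sigma^*-\sigma,b^*\rangle_{\mathbb{L}}=0$, and $\langle b,b^*\rangle_{\mathbb{L}}=B/\sqrt{A^2+B^2}$ is constant; (3) $\partial t^*/\partial u^*=-\kappa^* n$ and $\partial b^*/\partial u^*=-\tau^* n$, where $$\kappa^*=\frac{B\kappa-A\tau}{(A^2+B^2)\tau},\qquad \tau^*=\frac{1}{(A^2+B^2)\tau}.$$
   Context: A vector $x\in\mathbb{M}^3$ is spacelike if $\langle x,x\rangle_{\mathbb{L}}>0$ or $x=0$, timelike if $\langle x,x\rangle_{\mathbb{L}}<0$. A surface of this type (spanned by a one-parameter family of geodesic Bertrand curves with constants $A,B$, $A\kappa+B\tau=1$) is called a Razzaboni surface, and the map $\sigma\mapsto\sigma^*$ satisfying properties (2) is called a Razzaboni transformation, $\sigma^*$ the dual Razzaboni surface. *)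

(* Defs.v *)
From Stdlib Require Import Reals.
From Coquelicot Require Import Coquelicot.
Open Scope R_scope.

Record V3 := mkV3 { c1 : R; c2 : R; c3 : R }.

Definition vadd (x y : V3) : V3 := mkV3 (c1 x + c1 y) (c2 x + c2 y) (c3 x + c3 y).
Definition vscal (a : R) (x : V3) : V3 := mkV3 (a * c1 x) (a * c2 x) (a * c3 x).
Definition vsub (x y : V3) : V3 := vadd x (vscal (-1) y).

Definition lor (x y : V3) : R := - c1 x * c1 y + c2 x * c2 y + c3 x * c3 y.

Definition vderive (c : R -> V3) (x : R) (d : V3) : Prop :=
  is_derive (fun s => c1 (c s)) x (c1 d) /\
  is_derive (fun s => c2 (c s)) x (c2 d) /\
  is_derive (fun s => c3 (c s)) x (c3 d).

Definition du (f : R -> R -> V3) (u v : R) (d : V3) : Prop :=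
  vderive (fun s => f s v) u d.
Definition dv (f : R -> R -> V3) (u v : R) (d : V3) : Prop :=
  vderive (fun s => f u s) v d.

(* Main.v *)
Require Import Defs.
From Stdlib Require Import Reals Lra.
From Coquelicot Require Import Coquelicot.
Open Scope R_scope.

Lemma isd_eq (f : R -> R) x l l' : is_derive f x l -> l = l' -> is_derive f x l'.
Proof. intros H ->; exact H. Qed.

Lemma isd_add (f g : R -> R) x a b : is_derive f x a -> is_derive g x b ->
  is_derive (fun y => f y + g y) x (a + b).
Proof. intros; apply (is_derive_plus f g x a b); auto. Qed.

Lemma isd_scal (f : R -> R) x k a : is_derive f x a -> is_derive (fun y => k * f y) x (k * a).
Proof. intros; apply is_derive_scal; auto. Qed.

Lemma isd_mul (f g : R -> R) x a b : is_derive f x a -> is_derive g x b ->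
  is_derive (fun y => f y * g y) x (a * g x + f x * b).
Proof. intros Ha Hb. apply (is_derive_mult f g x a b Ha Hb). intros; apply Rmult_comm. Qed.

Lemma vd_eq c x d d' : vderive c x d -> d = d' -> vderive c x d'.
Proof. intros H ->; exact H. Qed.

Lemma vd_add f g x a b : vderive f x a -> vderive g x b ->
  vderive (fun y => vadd (f y) (g y)) x (vadd a b).
Proof. intros [? [? ?]] [? [? ?]]; split; [|split]; simpl; apply isd_add; auto. Qed.

Lemma vd_scal f x k a : vderive f x a -> vderive (fun y => vscal k (f y)) x (vscal k a).
Proof. intros [? [? ?]]; split; [|split]; simpl; apply isd_scal; auto. Qed.

Lemma vd_comp f g x a dg : vderive f (g x) a -> is_derive g x dg ->
  vderive (fun y => f (g y)) x (vscal dg a).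
Proof.
  intros [H1 [H2 H3]] Hg; split; [|split]; simpl;
  [apply (is_derive_comp (fun s => Defs.c1 (f s)) g x _ dg H1 Hg)
  |apply (is_derive_comp (fun s => c2 (f s)) g x _ dg H2 Hg)
  |apply (is_derive_comp (fun s => c3 (f s)) g x _ dg H3 Hg)].
Qed.

Lemma lor_derive f g x a b : vderive f x a -> vderive g x b ->
  is_derive (fun y => lor (f y) (g y)) x (lor a (g x) + lor (f x) b).
Proof.
  intros [F1 [F2 F3]] [G1 [G2 G3]]. unfold lor.
  eapply isd_eq.
  apply isd_add; [apply isd_add|].
  - apply (isd_mul (fun y => - Defs.c1 (f y))). 2: exact G1.
    apply (is_derive_opp (fun y => Defs.c1 (f y))); exact F1.
  - apply isd_mul; eauto.
  - apply isd_mul; eauto.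
  - simpl. unfold opp; simpl. ring.
Qed.

Lemma V3_ext x y : Defs.c1 x = Defs.c1 y -> c2 x = c2 y -> c3 x = c3 y -> x = y.
Proof. destruct x, y; simpl; intros -> -> ->; reflexivity. Qed.

Lemma lor_addl x y z : lor (vadd x y) z = lor x z + lor y z.
Proof. unfold lor, vadd; simpl; ring. Qed.
Lemma lor_addr x y z : lor z (vadd x y) = lor z x + lor z y.
Proof. unfold lor, vadd; simpl; ring. Qed.
Lemma lor_scall a x z : lor (vscal a x) z = a * lor x z.
Proof. unfold lor, vscal; simpl; ring. Qed.
Lemma lor_scalr a x z : lor z (vscal a x) = a * lor z x.
Proof. unfold lor, vscal; simpl; ring. Qed.
Lemma lor_sym x y : lor x y = lor y x.
Proof. unfold lor; ring. Qed.

Lemma vsub_simp x y : vsub (vadd x y) x = y.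
Proof. apply V3_ext; unfold vsub, vadd, vscal; simpl; ring. Qed.
Lemma vsub_simp2 x y : vsub x (vadd x y) = vscal (-1) y.
Proof. apply V3_ext; unfold vsub, vadd, vscal; simpl; ring. Qed.
Lemma rel1 x y z w : x - y = z * (1 - w) -> w = 1 -> x = y.
Proof. intros H1 ->. lra. Qed.

Theorem mainTheorem1
  (D : R * R -> Prop)
  (sigma t n b : R -> R -> V3) (lam kappa tau : R -> R -> R) (A B : R) :
  open D ->
  (* orthonormal frame {t,n,b}: t, b spacelike unit, n timelike unit *)
  (forall u v, D (u, v) ->
     lor (t u v) (t u v) = 1 /\ lor (n u v) (n u v) = -1 /\
     lor (b u v) (b u v) = 1 /\ lor (t u v) (n u v) = 0 /\
     lor (t u v) (b u v) = 0 /\ lor (n u v) (b u v) = 0) ->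
  (* sigma_u = t, sigma_v = lambda b, lambda nowhere zero *)
  (forall u v, D (u, v) -> du sigma u v (t u v)) ->
  (forall u v, D (u, v) -> dv sigma u v (vscal (lam u v) (b u v))) ->
  (forall u v, D (u, v) -> lam u v <> 0) ->
  (* Frenet-type equations along the u-curves *)
  (forall u v, D (u, v) -> du t u v (vscal (- kappa u v) (n u v))) ->
  (forall u v, D (u, v) ->
     du n u v (vadd (vscal (- kappa u v) (t u v)) (vscal (- tau u v) (b u v)))) ->
  (forall u v, D (u, v) -> du b u v (vscal (- tau u v) (n u v))) ->
  (* smoothness in v of the frame fields *)
  (forall u v, D (u, v) -> exists d, dv t u v d) ->
  (forall u v, D (u, v) -> exists d, dv n u v d) ->
  (forall u v, D (u, v) -> exists d, dv b u v d) ->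
  (* Bertrand-type condition *)
  ~ (A = 0 /\ B = 0) ->
  (forall u v, D (u, v) -> A * kappa u v + B * tau u v = 1) ->
  (forall u v, D (u, v) -> tau u v <> 0) ->
  let s := sqrt (A ^ 2 + B ^ 2) in
  let sigmas := fun u v => vadd (sigma u v) (vscal A (n u v)) in
  let ts := fun u v => vscal (/ s) (vadd (vscal B (t u v)) (vscal (- A) (b u v))) in
  let bs := fun u v => vscal (/ s) (vadd (vscal A (t u v)) (vscal B (b u v))) in
  let kappas := fun u v => (B * kappa u v - A * tau u v) / ((A ^ 2 + B ^ 2) * tau u v) in
  let taus := fun u v => 1 / ((A ^ 2 + B ^ 2) * tau u v) in
  (* a parameter u* along the u-curve v = const, given as u = psi (u_star) on an
     open set I of u_star values: d u_star / du = s * tau: psi' = 1 / (s * tau) *)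
  let is_ustar_param := fun (v : R) (I : R -> Prop) (psi : R -> R) =>
     open I /\ forall x, I x -> D (psi x, v) /\
       is_derive psi x (/ (s * tau (psi x) v)) in
  (* (1) *)
  (forall u v, D (u, v) ->
     du sigmas u v (vscal (tau u v) (vadd (vscal B (t u v)) (vscal (- A) (b u v))))) /\
  (forall v I psi, is_ustar_param v I psi -> forall x, I x ->
     vderive (fun y => sigmas (psi y) v) x (ts (psi x) v)) /\
  (forall u v, D (u, v) -> lor (ts u v) (ts u v) = 1) /\
  (forall u v, D (u, v) ->
     lor (n u v) (vscal (tau u v) (vadd (vscal B (t u v)) (vscal (- A) (b u v)))) = 0 /\
     exists d, dv sigmas u v d /\ lor (n u v) d = 0) /\
  (* (2) *)
  (exists c, forall u v, D (u, v) ->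
     sqrt (Rabs (lor (vsub (sigma u v) (sigmas u v)) (vsub (sigma u v) (sigmas u v)))) = c) /\
  (forall u v, D (u, v) ->
     lor (vsub (sigmas u v) (sigma u v)) (b u v) = 0 /\
     lor (vsub (sigmas u v) (sigma u v)) (bs u v) = 0 /\
     lor (b u v) (bs u v) = B / s) /\
  (* (3) *)
  (forall v I psi, is_ustar_param v I psi -> forall x, I x ->
     vderive (fun y => ts (psi y) v) x (vscal (- kappas (psi x) v) (n (psi x) v)) /\
     vderive (fun y => bs (psi y) v) x (vscal (- taus (psi x) v) (n (psi x) v))).
Proof.
  intros HD Hfr Hsu Hsv Hlam Htu Hnu Hbu Hdt Hdn Hdb HAB Hrel Htau s sigmas ts bs kappas taus isp.
  assert (Hpos : 0 < A ^ 2 + B ^ 2).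
  { destruct (Req_dec A 0) as [HA|HA].
    - assert (B <> 0) by (intro; apply HAB; auto). nra.
    - nra. }
  assert (Hs2 : s * s = A ^ 2 + B ^ 2) by (apply sqrt_sqrt; lra).
  assert (Hs0 : s <> 0) by (intro Hz; rewrite Hz in Hs2; lra).
  assert (Hss : / s * / s = / (A ^ 2 + B ^ 2)) by (rewrite <- Hs2; field; auto).
  assert (HsU : forall u v, D (u, v) ->
     du sigmas u v (vscal (tau u v) (vadd (vscal B (t u v)) (vscal (- A) (b u v))))).
  { intros u v H. unfold du, sigmas. eapply vd_eq.
    - apply vd_add; [apply Hsu; exact H| apply vd_scal; apply Hnu; exact H].
    - apply V3_ext; unfold vadd, vscal; simpl.
      + apply (rel1 _ _ (Defs.c1 (t u v)) (A * kappa u v + B * tau u v)); [ring | auto].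
      + apply (rel1 _ _ (c2 (t u v)) (A * kappa u v + B * tau u v)); [ring | auto].
      + apply (rel1 _ _ (c3 (t u v)) (A * kappa u v + B * tau u v)); [ring | auto]. }
  assert (HtsU : forall u v, D (u, v) ->
     du ts u v (vscal (/ s) (vadd (vscal B (vscal (- kappa u v) (n u v)))
                                   (vscal (- A) (vscal (- tau u v) (n u v)))))).
  { intros u v H. unfold du, ts. apply vd_scal. apply vd_add; apply vd_scal; [apply Htu|apply Hbu]; exact H. }
  assert (HbsU : forall u v, D (u, v) ->
     du bs u v (vscal (/ s) (vadd (vscal A (vscal (- kappa u v) (n u v)))
                                   (vscal B (vscal (- tau u v) (n u v)))))).
  { intros u v H. unfold du, bs. apply vd_scal. apply vd_add; apply vd_scal; [apply Htu|apply Hbu]; exact H. }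
  split; [exact HsU|].
  split.
  { intros v I psi [HI Hpsi] x Hx. destruct (Hpsi x Hx) as [HDx Hd].
    eapply vd_eq. apply (vd_comp (fun u => sigmas u v)); [apply HsU; exact HDx | exact Hd].
    specialize (Htau _ _ HDx).
    apply V3_ext; unfold ts, vadd, vscal; simpl; field; auto. }
  split.
  { intros u v H. destruct (Hfr u v H) as [Ht [Hn [Hb [Htn [Htb Hnb]]]]].
    unfold ts. rewrite !lor_scall, !lor_scalr, !lor_addl, !lor_addr, !lor_scall, !lor_scalr.
    rewrite (lor_sym (b u v) (t u v)), Ht, Hb, Htb.
    rewrite <- Rmult_assoc, Hss. field. lra. }
  split.
  { intros u v H. destruct (Hfr u v H) as [Ht [Hn [Hb [Htn [Htb Hnb]]]]].
    split.
    - rewrite lor_scalr, lor_addr, !lor_scalr, (lor_sym (n u v) (t u v)), Htn, Hnb. ring.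
    - destruct (Hdn u v H) as [dn Hdn'].
      exists (vadd (vscal (lam u v) (b u v)) (vscal A dn)). split.
      + unfold dv, sigmas. apply vd_add; [apply Hsv; exact H | apply vd_scal; exact Hdn'].
      + rewrite lor_addr, !lor_scalr, Hnb.
        destruct (HD _ H) as [eps Heps].
        assert (Hloc : locally v (fun s0 => -1 = lor (n u s0) (n u s0))).
        { exists eps. intros y Hy. symmetry. apply (Hfr u y). apply Heps.
          split; simpl; [apply ball_center | exact Hy]. }
        pose proof (is_derive_ext_loc _ _ v _ Hloc (is_derive_const (-1) v)) as H0.
        pose proof (lor_derive (fun s0 => n u s0) (fun s0 => n u s0) v dn dn Hdn' Hdn') as H1.
        apply is_derive_unique in H0. apply is_derive_unique in H1.
        assert (E : forall s0, lor (n u s0) (n u s0) = lor (n u s0) (n u s0)) by reflexivity. rewrite H0 in H1 || (simpl in H0, H1; rewrite H0 in H1). rewrite (lor_sym dn (n u v)) in H1. simpl in H1.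
        unfold zero in H1; simpl in H1. nra. }
  split.
  { exists (sqrt (A ^ 2)). intros u v H. destruct (Hfr u v H) as [Ht [Hn [Hb [Htn [Htb Hnb]]]]].
    f_equal. unfold sigmas. rewrite vsub_simp2, !lor_scall, !lor_scalr, Hn.
    replace (-1 * (A * (-1 * (A * -1)))) with (- (A ^ 2)) by ring.
    rewrite Rabs_Ropp. apply Rabs_pos_eq. nra. }
  split.
  { intros u v H. destruct (Hfr u v H) as [Ht [Hn [Hb [Htn [Htb Hnb]]]]].
    unfold sigmas, bs. rewrite !vsub_simp. split; [|split].
    - rewrite lor_scall, Hnb. ring.
    - rewrite lor_scall, lor_scalr, lor_addr, !lor_scalr, (lor_sym (n u v) (t u v)), Htn, Hnb. ring.
    - rewrite lor_scalr, lor_addr, !lor_scalr, (lor_sym (b u v) (t u v)), Htb, Hb.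
      field. auto. }
  { intros v I psi [HI Hpsi] x Hx. destruct (Hpsi x Hx) as [HDx Hd].
    specialize (Hrel _ _ HDx). specialize (Htau _ _ HDx).
    split.
    - eapply vd_eq. apply (vd_comp (fun u => ts u v)); [apply HtsU; exact HDx | exact Hd].
      unfold kappas; rewrite <- Hs2. apply V3_ext; unfold vadd, vscal; simpl; field; auto.
    - eapply vd_eq. apply (vd_comp (fun u => bs u v)); [apply HbsU; exact HDx | exact Hd].
      unfold taus; rewrite <- Hs2. apply V3_ext; unfold vadd, vscal; simpl.
      + apply (rel1 _ _ (Defs.c1 (n (psi x) v) / (s * s * tau (psi x) v)) (A * kappa (psi x) v + B * tau (psi x) v)); [field; auto | auto].
      + apply (rel1 _ _ (c2 (n (psi x) v) / (s * s * tau (psi x) v)) (A * kappa (psi x) v + B * tau (psi x) v)); [field; auto | auto].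
      + apply (rel1 _ _ (c3 (n (psi x) v) / (s * s * tau (psi x) v)) (A * kappa (psi x) v + B * tau (psi x) v)); [field; auto | auto]. }
Qed.
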